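(* Let $r>0$, let $(w_x,w_y)\in\mathbb{R}^2$ with $v_w=\sqrt{w_x^2+w_y^2}\in(0,1)$, and let $(x_f,y_f,\theta_f)$ be any goal pose with $(x_f,y_f)\in\mathbb{R}^2$ and $\theta_f\in[0,2\pi)$. Then there exists a $4\pi$-arc $LSL$ path that reaches the goal pose $(x_f,y_f,\theta_f)$ from the start pose $(0,0,0)$, and there also exists a $4\pi$-arc $RSR$ path that reaches it. That is, each of the two path types individually provides full reachability.
   Context: Setting: a vehicle moves in the plane at unit speed with minimum turning radius $r>0$, in a steady current of velocity $(w_x,w_y)$ whose speed is $v_w=\sqrt{w_x^2+w_y^2}$. It is assumed throughout that $0<v_w<1$. The start pose is $(0,0,0)$ and a goal pose is $(x_f,y_f,\theta_f)$ with $\theta_f\in[0,2\pi)$. $LSL$ paths: such a path has parameters $(\alpha,\beta,\gamma)$ with $\alpha,\gamma\ge 0$ and $\beta\ge0$. It consists of a maximal-curvature left arc of turning angle $\alpha$, then a straight segment of length $\beta$, then a left arc of turning angle $\gamma$, all traversed in the frame moving with the current. Its travel time is $T=r(\alpha+\gamma)+\beta$. It reaches the goal pose iff there is $k\in\mathbb{Z}$ such that $\alpha+\gamma=2k\pi+\theta_f$, $x_f-w_xT=r\sin\theta_f+\beta\cos\alpha$, and $y_f-w_yT=r(1-\cos\theta_f)+\beta\sin\alpha$. $RSR$ paths: such a path has parameters $(\alpha,\beta,\gamma)$ with $\alpha,\gamma\ge0$ and $\beta\ge 0$, right arcs, and travel time $T=r(\alpha+\gamma)+\beta$. It reaches the goal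 pose iff there is $k\in\mathbb{Z}$ such that $-\alpha-\gamma=2k\pi+\theta_f$, $x_f-w_xT=-r\sin\theta_f+\beta\cos\alpha$, and $y_f-w_yT=-r(1-\cos\theta_f)-\beta\sin\alpha$. Arc-range classes: an $LSL$ or $RSR$ path is called a $2\pi$-arc path if $\alpha,\gamma\in[0,2\pi)$, and a $4\pi$-arc path if $\alpha,\gamma\in[0,4\pi)$. *)

(* Defs.v *)
From Stdlib Require Import Reals.
Open Scope R_scope.

Definition travel_time (r alpha beta gamma : R) : R := r * (alpha + gamma) + beta.

(* The LSL path with parameters (alpha,beta,gamma), traversed in the frame moving
   with the current (wx,wy), reaches the goal pose (xf,yf,thf) from (0,0,0). *)
Definition LSL_reaches (r wx wy xf yf thf alpha beta gamma : R) : Prop :=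
  0 <= alpha /\ 0 <= beta /\ 0 <= gamma /\
  (exists k : Z, alpha + gamma = 2 * IZR k * PI + thf) /\
  xf - wx * travel_time r alpha beta gamma = r * sin thf + beta * cos alpha /\
  yf - wy * travel_time r alpha beta gamma = r * (1 - cos thf) + beta * sin alpha.

Definition RSR_reaches (r wx wy xf yf thf alpha beta gamma : R) : Prop :=
  0 <= alpha /\ 0 <= beta /\ 0 <= gamma /\
  (exists k : Z, - alpha - gamma = 2 * IZR k * PI + thf) /\
  xf - wx * travel_time r alpha beta gamma = - r * sin thf + beta * cos alpha /\
  yf - wy * travel_time r alpha beta gamma = - r * (1 - cos thf) - beta * sin alpha.

Definition arc4pi (alpha gamma : R) : Prop :=
  0 <= alpha < 4 * PI /\ 0 <= gamma < 4 * PI.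

Definition exists_4pi_LSL (r wx wy xf yf thf : R) : Prop :=
  exists alpha beta gamma, arc4pi alpha gamma /\ LSL_reaches r wx wy xf yf thf alpha beta gamma.

Definition exists_4pi_RSR (r wx wy xf yf thf : R) : Prop :=
  exists alpha beta gamma, arc4pi alpha gamma /\ RSR_reaches r wx wy xf yf thf alpha beta gamma.

(* Main.v *)
Require Import Defs.
From Stdlib Require Import Reals Lra.
Open Scope R_scope.

Lemma angle_exists (ux uy : R) : ux * ux + uy * uy = 1 ->
  exists a, 0 < a <= 2 * PI /\ cos a = ux /\ sin a = uy.
Proof.
  intros H. pose proof PI_RGT_0.
  assert (Hb : -1 <= ux <= 1) by nra.
  assert (Hs : sqrt (1 - ux²) = Rabs uy).
  { rewrite <- sqrt_Rsqr_abs. f_equal. unfold Rsqr. lra. }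
  destruct (Rle_or_lt 0 uy) as [Hy|Hy].
  - destruct (Req_dec ux 1) as [Hx|Hx].
    + exists (2*PI). rewrite cos_2PI, sin_2PI. split; [lra|]. split; nra.
    + exists (acos ux). pose proof (acos_bound ux) as Hl.
      assert (acos ux <> 0).
      { intro E. pose proof (cos_acos ux Hb) as C. rewrite E, cos_0 in C. lra. }
      split; [lra|]. split; [apply cos_acos; lra|].
      rewrite sin_acos by lra. rewrite Hs. apply Rabs_right; lra.
  - exists (2*PI - acos ux). pose proof (acos_bound ux).
    split; [lra|].
    rewrite cos_minus, sin_minus, cos_2PI, sin_2PI, cos_acos, sin_acos by lra.
    rewrite Hs, Rabs_left by lra. split; ring.
Qed.

Lemma dir_exists (qx qy wx wy : R) : wx * wx + wy * wy < 1 ->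
  exists a b, 0 < a <= 2 * PI /\ 0 <= b /\
    qx = b * (cos a + wx) /\ qy = b * (sin a + wy).
Proof.
  intros Hw. pose proof PI_RGT_0.
  destruct (Req_dec (qx * qx + qy * qy) 0) as [H0|H0].
  - exists (2*PI), 0. rewrite cos_2PI, sin_2PI.
    assert (qx = 0) by nra. assert (qy = 0) by nra. subst. lra.
  - set (n := sqrt (qx * qx + qy * qy)).
    assert (Hn : 0 < n) by (apply sqrt_lt_R0; nra).
    assert (Hn2 : n * n = qx * qx + qy * qy) by (apply sqrt_sqrt; nra).
    set (a := qx / n). set (b := qy / n).
    assert (Hab : a * a + b * b = 1).
    { unfold a, b. replace (qx / n * (qx / n) + qy / n * (qy / n)) with ((qx * qx + qy * qy) / (n * n)) by (field; lra).
      rewrite <- Hn2. field. lra. }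
    set (d := a * wx + b * wy).
    set (c := 1 - (wx * wx + wy * wy)).
    set (s := sqrt (d * d + c)).
    assert (Hs2 : s * s = d * d + c) by (apply sqrt_sqrt; unfold c; nra).
    assert (Hs0 : 0 <= s) by apply sqrt_pos.
    set (t := d + s).
    assert (Ht : 0 < t).
    { unfold t. assert (Hc : 0 < c) by (unfold c; lra). nra. }
    destruct (angle_exists (t * a - wx) (t * b - wy)) as [al [Hal [Hc Hsn]]].
    { assert (t * t - 2 * t * d = c) by (unfold t; nra). unfold c in *.
      unfold d in *. nra. }
    exists al, (n / t). split; [exact Hal|]. split.
    { apply Rlt_le. apply Rdiv_lt_0_compat; lra. }
    rewrite Hc, Hsn. unfold a, b. split; field; lra.
Qed.

Theorem theorem1 (r wx wy xf yf thf : R) :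
  0 < r ->
  0 < sqrt (wx ^ 2 + wy ^ 2) < 1 ->
  0 <= thf < 2 * PI ->
  exists_4pi_LSL r wx wy xf yf thf /\ exists_4pi_RSR r wx wy xf yf thf.
Proof.
  intros Hr [_ Hw1] Hth. pose proof PI_RGT_0.
  assert (Hw : wx * wx + wy * wy < 1).
  { destruct (Rlt_or_le (wx * wx + wy * wy) 1) as [h|h]; [exact h|].
    exfalso. apply (sqrt_le_1_alt) in h. rewrite sqrt_1 in h.
    replace (wx ^ 2 + wy ^ 2) with (wx * wx + wy * wy) in Hw1 by ring. lra. }
  split.
  - set (F := thf + 2 * PI).
    destruct (dir_exists (xf - r * sin thf - wx * r * F)
                         (yf - r * (1 - cos thf) - wy * r * F) wx wy Hw)
      as [al [be [Hal [Hbe [E1 E2]]]]].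
    exists al, be, (F - al). unfold arc4pi, LSL_reaches, travel_time, F in *.
    split; [lra|]. split; [lra|]. split; [lra|]. split; [lra|].
    split; [exists 1%Z; simpl; ring|]. split; nra.
  - set (F := 4 * PI - thf).
    destruct (dir_exists (xf + r * sin thf - wx * r * F)
                         (- (yf + r * (1 - cos thf) - wy * r * F)) wx (- wy))
      as [al [be [Hal [Hbe [E1 E2]]]]].
    { nra. }
    exists al, be, (F - al). unfold arc4pi, RSR_reaches, travel_time, F in *.
    split; [lra|]. split; [lra|]. split; [lra|]. split; [lra|].
    split; [exists (-2)%Z; simpl; ring|]. split; nra.
Qed.
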